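(* Under the standing setup, the Nisio semigroup $\mathscr S=(\mathscr S(t))_{t\ge0}$ of $(\mathcal P,f)$ is a semigroup of convex kernels on $\mathbb R^d$; in particular $\mathscr S(0)=I$ and $\mathscr S(s+t)=\mathscr S(s)\mathscr S(t)$ for all $s,t\ge0$. Moreover, $\mathscr S$ coincides with the semigroup envelope of $(\mathcal P,f)$.
   Context: Standing setup: $d\in\mathbb N$; vectors in $\mathbb R^d$; inequalities and suprema of vectors are componentwise; reals are identified with constant vectors. A $Q$-matrix is $q\in\mathbb R^{d\times d}$ with $q_{ii}\le0$, $q_{ij}\ge0$ ($i\ne j$), $\sum_jq_{ij}=0$. Let $\mathcal P$ be a set of $Q$-matrices and $f=(f_q)_{q\in\mathcal P}\subset\mathbb R^d$ with $\sup_{q\in\mathcal P}f_q=f_{q_0}=0$ for some $q_0\in\mathcal P$, such that $\mathcal Qu:=\sup_{q\in\mathcal P}(qu+f_q)$ is finite for every $u\in\mathbb R^d$. For $q\in\mathcal P$, $t\ge0$: $S_q(t)u_0:=e^{tq}u_0+\int_0^te^{sq}f_q\,ds$. For $h\ge0$: $\mathcal E_hu_0:=\sup_{q\in\mathcal P}S_q(h)u_0$. $P$ is the set of finite subsets $\pi\subset[0,\infty)$ with $0\in\pi$; $P_t:=\{\pi\in P:\max\pi=t\}$. For $\pi=\{t_0,\dots,t_m\}$ with $0=t_0<\dots<t_m$, $m\ge1$, $\mathcal E_\pi:=\mathcal E_{t_1-t_0}\circ\cdots\circ\mathcal E_{t_m-t_{m-1}}$, and $\mathcal E_{\{0\}}:=\mathcal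 E_0$. The Nisio semigroup of $(\mathcal P,f)$ is $\mathscr S(t)u_0:=\sup_{\pi\in P_t}\mathcal E_\pi u_0$. A kernel is a map $\mathbb R^d\to\mathbb R^d$ that is monotone (componentwise order) and maps each constant vector $\alpha$ to $\alpha$; convex means each component is convex. A semigroup is a family $(\mathscr T(t))_{t\ge0}$ of maps $\mathbb R^d\to\mathbb R^d$ with $\mathscr T(0)=I$ and $\mathscr T(s+t)=\mathscr T(s)\circ\mathscr T(t)$. The semigroup envelope of $(\mathcal P,f)$ is the semigroup $\mathscr T$ with $\mathscr T(t)u_0\ge S_q(t)u_0$ for all $t\ge0,u_0,q\in\mathcal P$, which is below (componentwise, for all $t,u_0$) every other semigroup with this domination property. *)

(* Defs.v *)
From Stdlib Require Import Reals List Sorted ClassicalEpsilon Factorial.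
From mathcomp Require Import all_boot.
Set Implicit Arguments.
Unset Strict Implicit.
Unset Printing Implicit Defensive.

Local Open Scope R_scope.

Definition vec (d : nat) := 'I_d -> R.
Definition mat (d : nat) := 'I_d -> 'I_d -> R.

Definition cst (d : nat) (a : R) : vec d := fun _ => a.

Definition vle (d : nat) (u v : vec d) : Prop := forall i, u i <= v i.

Definition mulv (d : nat) (q : mat d) (u : vec d) : vec d :=
  fun i => \big[Rplus/0]_(j < d) (q i j * u j).

Definition mpow (d : nat) (q : mat d) (k : nat) (u : vec d) : vec d :=
  iter k (mulv q) u.

Definition Qmatrix (d : nat) (q : mat d) : Prop :=
  (forall i, q i i <= 0) /\
  (forall i j, i != j -> 0 <= q i j) /\
  (forall i, \big[Rplus/0]_(j < d) q i j = 0).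

(* limit of a real sequence (chosen by epsilon; meaningful when it converges) *)
Definition lim (u : nat -> R) : R := epsilon (inhabits 0) (fun l => Un_cv u l).

Definition expv (d : nat) (q : mat d) (t : R) (u : vec d) : vec d :=
  fun i => lim (fun n => sum_f_R0 (fun k => t ^ k / INR (Factorial.fact k) * mpow q k u i) n).

Definition intv (d : nat) (q : mat d) (t : R) (g : vec d) : vec d :=
  fun i => epsilon (inhabits 0)
    (fun l => exists pr : Riemann_integrable (fun s => expv q s g i) 0 t,
                RiemannInt pr = l).

Definition Sq (d : nat) (f : mat d -> vec d) (q : mat d) (t : R) (u0 : vec d)
  : vec d := fun i => expv q t u0 i + intv q t (f q) i.

Definition supv (d : nat) (A : Type) (P : A -> Prop) (g : A -> vec d) : vec d :=
  fun i => epsilon (inhabits 0)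
    (fun l => is_lub (fun x => exists a, P a /\ x = g a i) l).

Definition Eh (d : nat) (P : mat d -> Prop) (f : mat d -> vec d) (h : R)
  (u0 : vec d) : vec d := supv P (fun q => Sq f q h u0).

(* a finite set pi = {t_0 < ... < t_m} is represented by the strictly increasing
   list [t_0; ...; t_m];  pi in P_t  iff  t_0 = 0 and t_m = t. *)
Definition in_Pt (t : R) (pi : list R) : Prop :=
  Sorted Rlt pi /\ head 1 pi = 0 /\ last 0 pi = t.

Fixpoint Echain (d : nat) (P : mat d -> Prop) (f : mat d -> vec d) (a : R)
  (l : list R) : vec d -> vec d :=
  match l with
  | nil => fun u => u
  | b :: rest => fun u => Eh P f (b - a) (Echain P f b rest u)
  end.

Definition Epi (d : nat) (P : mat d -> Prop) (f : mat d -> vec d) (pi : list R)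
  : vec d -> vec d :=
  match pi with
  | nil => Eh P f 0
  | t0 :: nil => Eh P f 0
  | t0 :: rest => Echain P f t0 rest
  end.

Definition Nisio (d : nat) (P : mat d -> Prop) (f : mat d -> vec d) (t : R)
  (u0 : vec d) : vec d := supv (in_Pt t) (fun pi => Epi P f pi u0).

Definition is_kernel (d : nat) (K : vec d -> vec d) : Prop :=
  (forall u v, vle u v -> vle (K u) (K v)) /\
  (forall a, K (@cst d a) = @cst d a).

Definition is_convex_map (d : nat) (K : vec d -> vec d) : Prop :=
  forall u v (lam : R), 0 <= lam <= 1 ->
    forall i, K (fun j => lam * u j + (1 - lam) * v j) i
              <= lam * K u i + (1 - lam) * K v i.

Definition is_semigroup (d : nat) (T : R -> vec d -> vec d) : Prop :=
  (forall u, T 0 u = u) /\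
  (forall s t, 0 <= s -> 0 <= t -> forall u, T (s + t) u = T s (T t u)).

Definition dominates (d : nat) (P : mat d -> Prop) (f : mat d -> vec d)
  (T : R -> vec d -> vec d) : Prop :=
  forall t u0 q, 0 <= t -> P q -> vle (Sq f q t u0) (T t u0).

Definition is_semigroup_envelope (d : nat) (P : mat d -> Prop) (f : mat d -> vec d)
  (T : R -> vec d -> vec d) : Prop :=
  is_semigroup T /\ dominates P f T /\
  (forall T' : R -> vec d -> vec d, is_semigroup T' -> dominates P f T' ->
     forall t u0, 0 <= t -> vle (T t u0) (T' t u0)).

(* Main.v *)
Require Import Defs.
From Stdlib Require Import Reals Lra Lia FunctionalExtensionality ClassicalEpsilon Sorted.
From Coquelicot Require Import Coquelicot.
From mathcomp Require Import all_boot all_order all_algebra.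
From mathcomp Require Import Rstruct.
From mathcomp Require Import ring.
From mathcomp Require Import zify.
Import GRing.Theory Num.Theory Order.TTheory.
Set Implicit Arguments.
Unset Strict Implicit.
Unset Printing Implicit Defensive.
Local Open Scope R_scope.

Section Mat.
Variable d : nat.
Local Open Scope ring_scope.

Definition Mx (q : mat d) : 'M[R]_d := \matrix_(i, j) q i j.
Definition colv (u : vec d) : 'cV[R]_d := \col_i u i.
Definition app (A : 'M[R]_d) (u : vec d) : vec d := fun i => (A *m colv u) i ord0.

Lemma appE A u i : app A u i = \sum_j A i j * u j.
Proof. rewrite /app mxE; apply: eq_bigr => j _; by rewrite mxE. Qed.

Lemma colv_app A u : colv (app A u) = A *m colv u.
Proof. apply/matrixP => i j; by rewrite (ord1 j) mxE. Qed.

Lemma app_mul A B u : app (A * B) u = app A (app B u).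
Proof. apply: functional_extensionality => i. by rewrite /app colv_app -mulmxE mulmxA. Qed.

Lemma app1 u : app 1 u = u.
Proof. apply: functional_extensionality => i. by rewrite /app mul1mx mxE. Qed.

Lemma mulv_app q u : mulv q u = app (Mx q) u.
Proof. apply: functional_extensionality => i. rewrite appE /mulv.
apply: eq_bigr => j _; by rewrite mxE. Qed.

Lemma mpow_app q k u : mpow q k u = app (Mx q ^+ k) u.
Proof.
elim: k => [|k IH]; first by rewrite expr0 app1.
by rewrite /mpow iterS -/(mpow q k u) IH mulv_app exprS app_mul.
Qed.

Lemma app_lin A a b u v i : app A (fun j => a * u j + b * v j) i = a * app A u i + b * app A v i.
Proof.
rewrite !appE !mulr_sumr -big_split /=; apply: eq_bigr => j _.
ring.
Qed.

Lemma pow_bound (A : 'M[R]_d) (m : R) : 0 <= m -> (forall i j, `|A i j| <= m) ->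
  forall k i j, `|(A ^+ k) i j| <= (d%:R * m) ^+ k.
Proof.
move=> m0 Hm; elim=> [|k IH] i j.
  rewrite expr0 expr0 mxE; by case: (i == j); rewrite ?normr1 ?normr0.
rewrite exprSr mxE (le_trans (ler_norm_sum _ _ _)) //.
apply: (@le_trans _ _ (\sum_(l < d) (d%:R * m) ^+ k * m)).
  apply: ler_sum => l _; rewrite normrM; apply: ler_pM => //; exact: IH.
by rewrite sumr_const card_ord exprSr mulr_natl -mulrnAr.
Qed.

End Mat.


Lemma is_series_zero : is_series (fun _ : nat => 0) 0.
Proof.
apply/is_series_Reals => eps Heps; exists 0%N => n _.
rewrite sum_eq_R0 // /Rdist Rminus_0_r Rabs_R0; lra.
Qed.

Lemma is_series_sumseq (I : Type) (r : seq I) (F : I -> nat -> R) (L : I -> R) :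
  (forall j, is_series (F j) (L j)) ->
  is_series (fun n => (\sum_(j <- r) F j n)%R) (\sum_(j <- r) L j)%R.
Proof.
move=> H; elim: r => [|x r IH].
  rewrite big_nil; apply: (is_series_ext _ _ _ _ is_series_zero) => n; by rewrite big_nil.
rewrite big_cons; apply: (is_series_ext (fun n => plus (F x n) (\sum_(j <- r) F j n)%R)).
  move=> n; by rewrite big_cons.
exact: is_series_plus.
Qed.

Lemma ex_series_exp (K : R) : ex_series (fun k => K ^ k / INR (Factorial.fact k)).
Proof.
exists (exp K); have := is_exp_Reals K; rewrite /is_pseries.
apply: is_series_ext => n; rewrite pow_n_pow /scal /= /mult /=; reflexivity.
Qed.

Section Exp.
Variable d : nat.
Local Open Scope ring_scope.

Definition term (A : 'M[R]_d) i j k : R := (A ^+ k) i j / (k`!)%:R.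
Definition EM (A : 'M[R]_d) : 'M[R]_d := \matrix_(i, j) Series (term A i j).
Definition mb (A : 'M[R]_d) : R := \sum_i \sum_j `|A i j|.

Lemma mb_ge0 (A : 'M[R]_d) : 0 <= mb A.
Proof. apply: sumr_ge0 => i _; apply: sumr_ge0 => j _; exact: normr_ge0. Qed.

Lemma le_sum1 (F : 'I_d -> R) j0 : (forall j, 0 <= F j) -> F j0 <= \sum_j F j.
Proof.
move=> H; rewrite (bigD1 j0) //=; apply: ler_wpDr => //; exact: sumr_ge0.
Qed.

Lemma mb_bound (A : 'M[R]_d) i j : `|A i j| <= mb A.
Proof.
have h1 : `|A i j| <= \sum_j' `|A i j'|.
  apply: (@le_sum1 (fun j => `|A i j|)) => ?; exact: normr_ge0.
apply: (le_trans h1); rewrite /mb.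
apply: (@le_sum1 (fun i => \sum_j `|A i j|)) => i'; apply: sumr_ge0 => ? _; exact: normr_ge0.
Qed.

Lemma term_abs A i j k :
  Rle (Rabs (term A i j k)) (Rdiv (pow (Rmult (INR d) (mb A)) k) (INR (Factorial.fact k))).
Proof.
rewrite /term RabsE RpowE RdivE factE !INRE RmultE normrM normfV normr_nat.
apply/RleP; apply: ler_wpM2r; first by rewrite invr_ge0.
exact: pow_bound (mb_ge0 A) (mb_bound A) k i j.
Qed.

Lemma ex_series_term_abs A i j : ex_series (fun k => Rabs (term A i j k)).
Proof.
apply: (ex_series_le _ _ _ (ex_series_exp (Rmult (INR d) (mb A)))) => n.
rewrite /norm /= /abs /= Rabs_Rabsolu. exact: term_abs.
Qed.

Lemma is_series_EM A i j : is_series (term A i j) (EM A i j).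
Proof.
rewrite mxE; apply: Series_correct; apply: ex_series_Rabs; exact: ex_series_term_abs.
Qed.


Lemma EM_mul (A B : 'M[R]_d) : A * B = B * A -> EM (A + B) = EM A * EM B.
Proof.
move=> AB; apply/matrixP => i l.
rewrite -mulmxE [RHS]mxE [LHS]mxE.
apply: is_series_unique.
have H j := is_series_mult _ _ _ _ (@is_series_EM A i j) (@is_series_EM B j l)
   (@ex_series_term_abs A i j) (@ex_series_term_abs B j l).
apply: (is_series_ext _ _ _ _ (@is_series_sumseq _ (index_enum 'I_d) _ _ H)) => n.
rewrite /term addrC exprDn_comm; last by [].
rewrite summxE RdivE mulr_suml.
under eq_bigr => j _ do rewrite sum_f_R0E big_mkord.
rewrite exchange_big /=; apply: eq_bigr => k _.
have kn : (k <= n)%N by rewrite -ltnS.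
have cBA : B ^+ (n - k) * A ^+ k = A ^+ k * B ^+ (n - k).
  exact: (commrX k (commr_sym (commrX (n - k) AB))).
rewrite cBA mulmxnE -mulmxE mxE -[(\sum_j _) *+ _]mulr_natr mulr_suml mulr_suml.
apply: eq_bigr => j _.
change (Nat.sub n k) with (n - k)%N.
rewrite -(bin_fact kn) !natrM.
rewrite ?RdivE ?RmultE.
have h1 : (k`!)%:R != 0 :> R by rewrite pnatr_eq0 -lt0n fact_gt0.
have h2 : ((n - k)`!)%:R != 0 :> R by rewrite pnatr_eq0 -lt0n fact_gt0.
have h3 : ('C(n, k))%:R != 0 :> R by rewrite pnatr_eq0 -lt0n bin_gt0.
field; rewrite ?h1 ?h2 ?h3 //.
Qed.

Lemma scalar_pow (a : R) k : (a%:M : 'M[R]_d) ^+ k = (a ^+ k)%:M.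
Proof.
elim: k => [|k IH]; first by rewrite !expr0.
by rewrite exprS IH -mulmxE mul_scalar_mx scale_scalar_mx exprS.
Qed.

Lemma EM_scalar (a : R) : EM (a%:M) = (exp a)%:M.
Proof.
apply/matrixP => i j; rewrite !mxE.
apply: is_series_unique; rewrite /term.
case: (eqVneq i j) => [<-|ne].
  change (exp a *+ true) with (exp a *+ 1); rewrite mulr1n.
  apply: (is_series_ext _ _ _ _ (is_exp_Reals a)) => k.
  rewrite scalar_pow mxE eqxx mulr1n /scal /= /mult /= pow_n_pow RpowE INRE factE; reflexivity.
change (exp a *+ false) with (exp a *+ 0); rewrite mulr0n.
apply: (is_series_ext _ _ _ _ is_series_zero) => k.
by rewrite scalar_pow mxE (negbTE ne) mulr0n ?RdivE mul0r.
Qed.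

Lemma pow_nonneg (A : 'M[R]_d) : (forall i j, 0 <= A i j) ->
  forall k i j, 0 <= (A ^+ k) i j.
Proof.
move=> H; elim=> [|k IH] i j; first by rewrite expr0 mxE ler0n.
rewrite exprSr -mulmxE mxE; apply: sumr_ge0 => l _; exact: mulr_ge0.
Qed.

Lemma EM_nonneg (A : 'M[R]_d) : (forall i j, 0 <= A i j) ->
  forall i j, 0 <= EM A i j.
Proof.
move=> H i j; rewrite mxE.
apply/RleP.
apply: (Rle_trans _ (Series (fun _ : nat => R0))).
  apply: Req_le; exact: (esym (is_series_unique _ _ is_series_zero)).
apply: Series_le; last first.
  apply: ex_series_Rabs; exact: ex_series_term_abs.
move=> n; split; first exact: Rle_refl.
apply/RleP; rewrite /term; apply: divr_ge0; first exact: pow_nonneg.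
exact: ler0n.
Qed.

Lemma EM0 : EM 0 = 1.
Proof.
have -> : (0 : 'M[R]_d) = (0 : R)%:M.
  apply/matrixP => i j; rewrite !mxE; by case: (i == j).
by rewrite EM_scalar exp_0.
Qed.

Definition ES (q : mat d) (t : R) : 'M[R]_d := EM (t *: Mx q).

Lemma ES_add q s t : ES q (s + t) = ES q s * ES q t.
Proof.
rewrite /ES scalerDl EM_mul //.
by rewrite -!mulmxE -!scalemxAl -!scalemxAr !scalerA mulrC.
Qed.

Lemma ES0 q : ES q 0 = 1.
Proof. by rewrite /ES scale0r EM0. Qed.

Lemma ES_nonneg q t : Qmatrix q -> Rle 0 t -> forall i j, 0 <= ES q t i j.
Proof.
move=> [Hd [Ho Hs]] t0 i j.
set c := \sum_i `|q i i|.
set P := Mx q + c%:M.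
have cge : forall i, `|q i i| <= c.
  move=> i'; apply: (@le_sum1 (fun i => `|q i i|)) => ?; exact: normr_ge0.
have Pnn : forall i j, 0 <= (t *: P) i j.
  move=> i' j'; rewrite !mxE; apply: mulr_ge0; first exact/RleP.
  case: (eqVneq i' j') => [<-|ne].
    apply: (le_trans (_ : 0 <= -`|q i' i'| + c)); first by rewrite addrC subr_ge0.
    by rewrite lerD2r; apply: lerNnormlW.
  change (c *+ false) with (c *+ 0); rewrite mulr0n addr0; exact/RleP/Ho.
have E : t *: Mx q = t *: P + (- (t * c))%:M.
  apply/matrixP => i' j'; rewrite !mxE; case: (i' == j') => /=; ring.
rewrite /ES E EM_mul; last by rewrite -!mulmxE scalar_mxC.
rewrite EM_scalar -mulmxE mul_mx_scalar mxE; apply: mulr_ge0; last exact: EM_nonneg.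
exact/RleP/Rlt_le/exp_pos.
Qed.

End Exp.


Lemma lim_unique (u : nat -> R) l : Un_cv u l -> Defs.lim u = l.
Proof.
move=> H; rewrite /Defs.lim.
have H' := epsilon_spec (inhabits 0) (fun l => Un_cv u l) (ex_intro _ l H).
exact: UL_sequence H' H.
Qed.

Lemma term_le_series (a : nat -> R) (l : R) :
  (forall n, 0 <= a n) -> is_series a l -> forall n, a n <= l.
Proof.
move=> Hp Hs.
have Hcv : Un_cv (sum_f_R0 a) l by apply/is_series_Reals.
have Hg : Un_growing (sum_f_R0 a).
  move=> m; rewrite tech5; have := Hp m.+1; lra.
case=> [|m]; first by have := growing_ineq _ _ Hg Hcv 0%N.
apply: Rle_trans (growing_ineq _ _ Hg Hcv m.+1); rewrite tech5.
have := cond_pos_sum a m Hp; lra.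
Qed.

Lemma is_RInt_sumseq (I : Type) (r : seq I) (c : I -> R) (F : I -> R -> R) (L : I -> R) a b :
  (forall j, is_RInt (F j) a b (L j)) ->
  is_RInt (fun x => (\sum_(j <- r) c j * F j x)%R) a b (\sum_(j <- r) c j * L j)%R.
Proof.
move=> H; elim: r => [|x r IH].
  rewrite big_nil; apply: (is_RInt_ext (fun _ => 0)).
    by move=> t _; rewrite big_nil.
  have := @is_RInt_const _ a b 0.
  by rewrite /scal /= /mult /= Rmult_0_r.
rewrite big_cons; apply: (is_RInt_ext (fun t => plus (c x * F x t) (\sum_(j <- r) c j * F j t)%R)).
  by move=> t _; rewrite big_cons.
apply: is_RInt_plus => //; exact: (is_RInt_scal _ _ _ (c x) _ (H x)).
Qed.

Section Flow.
Variable d : nat.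
Implicit Types (q : mat d) (u v g : vec d).

Lemma scale_pow (t : R) (A : 'M[R]_d) k : ((t *: A) ^+ k = t ^+ k *: A ^+ k)%R.
Proof.
elim: k => [|k IH]; first by rewrite !expr0 scale1r.
by rewrite !exprS IH -!mulmxE -scalemxAl -scalemxAr scalerA.
Qed.

Lemma expv_app q t u i : expv q t u i = app (ES q t) u i.
Proof.
rewrite /expv; apply: lim_unique.
have : is_series (fun k => t ^ k / INR (Factorial.fact k) * mpow q k u i) (app (ES q t) u i).
  rewrite appE.
  have H j := is_series_scal_r (u j) _ _ (@is_series_EM d (t *: Mx q) i j).
  apply: (is_series_ext _ _ _ _ (@is_series_sumseq _ (index_enum 'I_d) _ _ H)) => k.
  rewrite mpow_app appE /= !RealsE mulr_sumr; apply: eq_bigr => j _.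
  rewrite /term scale_pow mxE ?RealsE; field.
  by rewrite pnatr_eq0 -lt0n fact_gt0.
by move/is_series_Reals.
Qed.

Lemma expv_appF q t u : expv q t u = app (ES q t) u.
Proof. apply: functional_extensionality => i; exact: expv_app. Qed.


Lemma ES_pseries q t i j : ES q t i j = PSeries (fun k => term (Mx q) i j k) t.
Proof.
rewrite /ES mxE /PSeries; apply: Series_ext => k.
rewrite /term scale_pow mxE ?RealsE; ring.
Qed.

Lemma exp_term_le (y : R) n : 0 <= y -> y ^ n / INR (Factorial.fact n) <= exp y.
Proof.
move=> y0; apply: (term_le_series (a := fun n => y ^ n / INR (Factorial.fact n))).
  move=> m; apply: Rmult_le_pos; first exact: pow_le.
  apply/Rlt_le/Rinv_0_lt_compat/INR_fact_lt_0.
apply: (is_series_ext _ _ _ _ (is_exp_Reals y)) => m.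
by rewrite pow_n_pow /scal /= /mult /=.
Qed.

Lemma CV_inf q i j x : Rbar_lt (Rabs x) (CV_radius (fun k => term (Mx q) i j k)).
Proof.
have H := CV_radius_bounded (fun k => term (Mx q) i j k).
apply: (Rbar_lt_le_trans _ (Rbar.Finite (Rabs x + 1))); first by rewrite /=; lra.
apply: (proj1 H).
set K := INR d * mb (Mx q).
have K0 : 0 <= K.
  apply: Rmult_le_pos; first exact: pos_INR. exact/RleP/mb_ge0.
have r0 : 0 <= Rabs x + 1 by have := Rabs_pos x; lra.
exists (exp (K * (Rabs x + 1))) => n.
rewrite Rabs_mult -RPow_abs (Rabs_right (Rabs x + 1)); last lra.
apply: Rle_trans (exp_term_le n (Rmult_le_pos _ _ K0 r0)).
rewrite Rpow_mult_distr /Rdiv Rmult_assoc (Rmult_comm ((Rabs x + 1) ^ n)) -Rmult_assoc.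
apply: Rmult_le_compat_r; first exact: pow_le.
exact: term_abs.
Qed.

Lemma ES_cont q i j : continuity (fun t => ES q t i j).
Proof.
move=> x.
have -> : (fun t => ES q t i j) = PSeries (fun k => term (Mx q) i j k).
  apply: functional_extensionality => t; exact: ES_pseries.
apply: PSeries_continuity; exact: CV_inf.
Qed.

Lemma expv_cont q u i : continuity (fun t => expv q t u i).
Proof.
have -> : (fun t => expv q t u i) = (fun t => \sum_j (fun j t => ES q t i j * u j) j t)%R.
  apply: functional_extensionality => t; by rewrite expv_app appE.
apply: continuity_sum => j _ x.
apply: (continuity_pt_mult (fun t => ES q t i j) (fun _ => u j)); first exact: ES_cont.
exact: continuity_pt_const.
Qed.

Lemma ex_RInt_expv q u i a b : ex_RInt (fun s => expv q s u i) a b.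
Proof.
apply: ex_RInt_continuous => z _; apply/continuity_pt_filterlim; exact: expv_cont.
Qed.

Lemma intv_RInt q t g i : 0 <= t -> intv q t g i = RInt (fun s => expv q s g i) 0 t.
Proof.
move=> t0.
have pr := continuity_implies_RiemannInt t0 (fun x _ => expv_cont q g i x).
rewrite /intv.
have [pr' <-] := epsilon_spec (inhabits 0)
  (fun l => exists pr : Riemann_integrable (fun s => expv q s g i) 0 t, RiemannInt pr = l)
  (ex_intro _ (RiemannInt pr) (ex_intro _ pr erefl)).
by rewrite (RInt_Reals _ _ _ pr').
Qed.

End Flow.


Section SqProps.
Variable d : nat.
Implicit Types (q : mat d) (u v g : vec d).

Lemma expv_lin q t a b u v i :
  expv q t (fun j => a * u j + b * v j) i = a * expv q t u i + b * expv q t v i.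
Proof. rewrite !expv_app; exact: app_lin. Qed.

Lemma expv_mono q t u v : Qmatrix q -> 0 <= t -> vle u v -> vle (expv q t u) (expv q t v).
Proof.
move=> Q t0 uv i; rewrite !expv_app !appE; apply/RleP; apply: ler_sum => j _.
apply: ler_wpM2l; [exact: ES_nonneg | exact/RleP].
Qed.

Lemma mulv_cst q a : Qmatrix q -> mulv q (@cst d a) = @cst d 0.
Proof.
move=> [_ [_ Hs]]; apply: functional_extensionality => i.
rewrite /mulv /cst.
have -> : \big[Rplus/0]_(j < d) (q i j * a) = ((\sum_(j < d) q i j) * a)%R.
  by rewrite mulr_suml.
by rewrite Hs mul0r.
Qed.

Lemma mpow_cst q a k : Qmatrix q -> mpow q k.+1 (@cst d a) = @cst d 0.
Proof.
move=> Q; elim: k => [|k IH]; first by rewrite /mpow /= mulv_cst.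
by rewrite /mpow iterS -/(mpow q k.+1 (@cst d a)) IH mulv_cst.
Qed.

Lemma expv_cst q t a : Qmatrix q -> expv q t (@cst d a) = @cst d a.
Proof.
move=> Q; apply: functional_extensionality => i; rewrite /expv; apply: lim_unique.
have E n : sum_f_R0 (fun k => t ^ k / INR (Factorial.fact k) * mpow q k (@cst d a) i) n = a.
  elim: n => [|n IH]; first by rewrite /= /cst; lra.
  by rewrite tech5 IH mpow_cst // /cst Rmult_0_r Rplus_0_r.
move=> eps e0; exists 0%N => n _; rewrite E /cst /Rdist Rminus_diag Rabs_R0; lra.
Qed.

Lemma expv0 q u : expv q 0 u = u.
Proof. by rewrite expv_appF ES0 app1. Qed.

Lemma expv_comp q s t u : expv q s (expv q t u) = expv q (s + t) u.
Proof. by rewrite !expv_appF ES_add app_mul. Qed.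

Lemma intv0 q g : intv q 0 g = @cst d 0.
Proof.
apply: functional_extensionality => i; rewrite intv_RInt; last exact: Rle_refl.
by rewrite RInt_point.
Qed.

Lemma intv_le0 q t g : Qmatrix q -> 0 <= t -> vle g (@cst d 0) -> vle (intv q t g) (@cst d 0).
Proof.
move=> Q t0 g0 i; rewrite intv_RInt //.
apply: Rle_trans (RInt_le _ (fun _ => 0) _ _ t0 (ex_RInt_expv _ _ _ _ _) (ex_RInt_const _ _ _) _) _.
  move=> x [x0 _]; have := expv_mono Q (Rlt_le _ _ x0) g0 i; by rewrite expv_cst.
rewrite RInt_const /scal /= /mult /= /cst; lra.
Qed.

Lemma intv_cst0 q t : Qmatrix q -> 0 <= t -> intv q t (@cst d 0) = @cst d 0.
Proof.
move=> Q t0; apply: functional_extensionality => i; rewrite intv_RInt //.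
rewrite (RInt_ext _ (fun _ => 0)); last by move=> x _; rewrite expv_cst.
rewrite RInt_const /scal /= /mult /= /cst; lra.
Qed.

Lemma intv_flow q s t g i : 0 <= s -> 0 <= t ->
  expv q s (intv q t g) i + intv q s g i = intv q (s + t) g i.
Proof.
move=> s0 t0.
rewrite !intv_RInt //; last lra.
rewrite expv_app appE.
under eq_bigr => j _ do rewrite intv_RInt //.
have H j := RInt_correct _ _ _ (ex_RInt_expv q g j 0 t).
rewrite -(is_RInt_unique _ _ _ _ (@is_RInt_sumseq _ (index_enum 'I_d) (fun j => ES q s i j) _ _ 0 t H)).
rewrite (RInt_ext _ (fun r => scal 1 (expv q (1 * r + s) g i))); last first.
  move=> x _; rewrite /scal /= /mult /= Rmult_1_l -appE -expv_app expv_comp.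
  by rewrite Rmult_1_l Rplus_comm.
rewrite (RInt_comp_lin (fun r => expv q r g i) 1 s 0 t); last exact: ex_RInt_expv.
rewrite Rmult_0_r Rplus_0_l Rmult_1_l (Rplus_comm t s) Rplus_comm.
have := RInt_Chasles (fun r => expv q r g i) 0 s (s + t) (ex_RInt_expv _ _ _ _ _) (ex_RInt_expv _ _ _ _ _).
by rewrite /plus /=.
Qed.

End SqProps.

Section SqLemmas.
Variable d : nat.
Implicit Types (q : mat d) (u v g : vec d).
Variable f : mat d -> vec d.

Lemma Sq_id q u : Sq f q 0 u = u.
Proof.
apply: functional_extensionality => i; rewrite /Sq expv0 intv0 /cst; lra.
Qed.

Lemma Sq_mono q t u v : Qmatrix q -> 0 <= t -> vle u v -> vle (Sq f q t u) (Sq f q t v).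
Proof. move=> Q t0 uv i; have := expv_mono Q t0 uv i; rewrite /Sq; lra. Qed.

Lemma Sq_aff q t a u v i :
  Sq f q t (fun j => a * u j + (1 - a) * v j) i = a * Sq f q t u i + (1 - a) * Sq f q t v i.
Proof. rewrite /Sq expv_lin !RealsE; ring. Qed.

Lemma Sq_shift q t u c i : Qmatrix q -> Sq f q t (fun j => u j + c) i = Sq f q t u i + c.
Proof.
move=> Q.
have -> : (fun j => u j + c) = (fun j => 1 * u j + c * @cst d 1 j).
  apply: functional_extensionality => j; rewrite /cst; lra.
rewrite /Sq expv_lin expv_cst // /cst; lra.
Qed.

Lemma Sq_flow q s t u : 0 <= s -> 0 <= t -> Sq f q (s + t) u = Sq f q s (Sq f q t u).
Proof.
move=> s0 t0; apply: functional_extensionality => i; rewrite /Sq.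
have -> : (fun j => expv q t u j + intv q t (f q) j) =
          (fun j => 1 * expv q t u j + 1 * intv q t (f q) j).
  apply: functional_extensionality => j; lra.
rewrite expv_lin expv_comp -(intv_flow q (f q) i s0 t0); lra.
Qed.

Lemma Sq_cst_le q t a i : Qmatrix q -> 0 <= t -> vle (f q) (@cst d 0) -> Sq f q t (@cst d a) i <= a.
Proof.
move=> Q t0 fq; rewrite /Sq expv_cst //; have := intv_le0 Q t0 fq i; rewrite /cst; lra.
Qed.

Lemma Sq_cst_eq q t a : Qmatrix q -> 0 <= t -> f q = @cst d 0 -> Sq f q t (@cst d a) = @cst d a.
Proof.
move=> Q t0 fq; apply: functional_extensionality => i.
rewrite /Sq expv_cst // fq intv_cst0 // /cst; lra.
Qed.

End SqLemmas.

Section Sup.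
Variable d : nat.

Definition nb (u : vec d) : R := (\sum_j `|u j|)%R.

Lemma nb_ub (u : vec d) i : u i <= nb u.
Proof.
apply/RleP; apply: (le_trans (real_ler_norm _)); first exact: num_real.
by apply: (@le_sum1 d (fun j => `|u j|)%R) => ?; exact: normr_ge0.
Qed.

Lemma nb_lb (u : vec d) i : - nb u <= u i.
Proof.
have := nb_ub (fun j => - u j) i.
have -> : nb (fun j => - u j) = nb u.
  rewrite /nb; apply: eq_bigr => j _; by rewrite RoppE normrN.
lra.
Qed.

Variables (A : Type) (P : A -> Prop) (g : A -> vec d) (i : 'I_d).
Hypothesis ne : exists a, P a.
Hypothesis bd : exists M, forall a, P a -> g a i <= M.

Lemma supv_lub : is_lub (fun x => exists a, P a /\ x = g a i) (supv P g i).
Proof.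
rewrite /supv; apply: (epsilon_spec (inhabits 0) (fun l => is_lub _ l)).
have Hb : bound (fun x => exists a, P a /\ x = g a i).
  case: bd => M HM; exists M => x [a [Pa ->]]; exact: HM.
have He : exists x, (fun x => exists a, P a /\ x = g a i) x.
  case: ne => a Pa; exists (g a i); by exists a.
have [m Hm] := completeness _ Hb He.
by exists m.
Qed.

Lemma supv_ge a : P a -> g a i <= supv P g i.
Proof. move=> Pa; apply: (proj1 supv_lub); by exists a. Qed.

Lemma supv_le M : (forall a, P a -> g a i <= M) -> supv P g i <= M.
Proof. move=> H; apply: (proj2 supv_lub) => x [a [Pa ->]]; exact: H. Qed.

Lemma supv_approx eps : 0 < eps -> exists a, P a /\ supv P g i - eps < g a i.
Proof.
move=> e0; apply: NNPP => H.
have : supv P g i <= supv P g i - eps; last lra.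
apply: supv_le => a Pa; apply: Rnot_lt_le => Hlt; apply: H; exists a; split => //.
Qed.

End Sup.


Fixpoint incr (a : R) (l : list R) : Prop :=
  match l with
  | nil => True
  | b :: r => a < b /\ incr b r
  end.

Inductive Ref : R -> list R -> list R -> Prop :=
  | Ref_nil a : Ref a nil nil
  | Ref_keep a b l l' : a < b -> Ref b l l' -> Ref a (b :: l) (b :: l')
  | Ref_ins a x b l l' : a < x -> x < b -> Ref x (b :: l) l' -> Ref a (b :: l) (x :: l').

Lemma incr_last a l : incr a l -> a <= last a l.
Proof.
elim: l a => [|b r IH] a /=; first by move=> _; exact: Rle_refl.
move=> [ab Hr]; have := IH b Hr; lra.
Qed.

Lemma incr_app a l1 l2 : incr a (l1 ++ l2) <-> incr a l1 /\ incr (last a l1) l2.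
Proof.
elim: l1 a => [|b r IH] a /=; first by split => [H|[_ H]].
rewrite IH; split; [move=> [? [? ?]] | move=> [[? ?] ?]]; by split.
Qed.

Lemma last_app (a : R) (l1 l2 : list R) : last a (l1 ++ l2) = last (last a l1) l2.
Proof. by rewrite last_cat. Qed.

Lemma incr_map (a c : R) (l : list R) : incr a l -> incr (a + c) (map (fun x => x + c) l).
Proof.
elim: l a => [|b r IH] a //= [ab Hr]; split; [lra | exact: IH].
Qed.

Lemma last_map (a c : R) (l : list R) : last (a + c) (map (fun x => x + c) l) = last a l + c.
Proof. elim: l a => [|b r IH] a //=. Qed.

Lemma Ref_refl a l : incr a l -> Ref a l l.
Proof.
elim: l a => [|b r IH] a /=; first by move=> _; exact: Ref_nil.
move=> [ab Hr]; apply: Ref_keep => //; exact: IH.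
Qed.

Lemma Ref_incr a l l' : Ref a l l' -> incr a l'.
Proof. elim => {a l l'} [a|a b l l' ab _ IH|a x b l l' ax xb _ IH] //=; by split. Qed.

Lemma Ref_last a l l' : Ref a l l' -> last a l' = last a l.
Proof. elim => {a l l'} [a|a b l l' ab _ IH|a x b l l' ax xb _ IH] /=; by rewrite ?IH. Qed.

Lemma Ref_lt a l l' : Ref a l l' -> incr a l.
Proof.
elim => {a l l'} [a|a b l l' ab _ IH|a x b l l' ax xb _ IH] //=.
move: IH => /= [xb' Hl]; split => //; lra.
Qed.

Lemma merge_ref n : forall a l1 l2, (size l1 + size l2 <= n)%N ->
  incr a l1 -> incr a l2 -> last a l1 = last a l2 ->
  exists l3, Ref a l1 l3 /\ Ref a l2 l3.
Proof.
elim: n => [|n IH] a [|b1 r1] [|b2 r2] //= Hn.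
- move=> _ _ _; exists nil; split; exact: Ref_nil.
- move=> _ _ _; exists nil; split; exact: Ref_nil.
- move=> _ [ab Hr] E; have := incr_last Hr; rewrite -E; lra.
- move=> [ab Hr] _ E; have := incr_last Hr; rewrite E; lra.
move=> [ab1 H1] [ab2 H2] E.
case: (Rtotal_order b1 b2) => [lt|[eq|gt]].
- have Hs : (size r1 + size (b2 :: r2) <= n)%N by move: Hn => /=; lia.
  have [l3 [R1 R2]] := IH b1 r1 (b2 :: r2) Hs H1 (conj lt H2) E.
  exists (b1 :: l3); split; [exact: Ref_keep | exact: Ref_ins].
- subst b2.
  have Hs : (size r1 + size r2 <= n)%N by move: Hn => /=; lia.
  have [l3 [R1 R2]] := IH b1 r1 r2 Hs H1 H2 E.
  exists (b1 :: l3); split; exact: Ref_keep.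
- have Hs : (size (b1 :: r1) + size r2 <= n)%N by move: Hn => /=; lia.
  have [l3 [R1 R2]] := IH b2 (b1 :: r1) r2 Hs (conj gt H1) H2 E.
  exists (b2 :: l3); split; [exact: Ref_ins | exact: Ref_keep].
Qed.

Lemma split_ref a l s : incr a l -> a < s -> s <= last a l ->
  exists l1 l2, Ref a l (l1 ++ l2) /\ last a l1 = s.
Proof.
elim: l a => [|b r IH] a /=; first by move=> _; lra.
move=> [ab Hr] as0 sl.
case: (Rtotal_order b s) => [lt|[eq|gt]].
- have [l1 [l2 [R1 E]]] := IH b Hr lt sl.
  exists (b :: l1), l2; split => //; exact: Ref_keep.
- exists [:: b], r; split; last by [].
  apply: Ref_keep => //; exact: Ref_refl.
- exists [:: s], (b :: r); split; last by [].
  apply: Ref_ins => //; apply: Ref_refl => /=; by split.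
Qed.

Lemma sorted_incr a l : Sorted Rlt (a :: l) <-> incr a l.
Proof.
elim: l a => [|b r IH] a /=.
  split=> // _; apply: Sorted_cons; [exact: Sorted_nil | exact: HdRel_nil].
split.
  move=> H; have [Hs Hh] := Sorted_inv H; split; first exact: HdRel_inv Hh.
  exact/IH.
move=> [ab Hr]; apply: Sorted_cons; [exact/IH | exact: HdRel_cons].
Qed.

Lemma Pt_char t pi : in_Pt t pi -> exists l, pi = 0 :: l /\ incr 0 l /\ last 0 l = t.
Proof.
case: pi => [|a l] [Hs [Hh Hl]] /=; first by move: Hh => /=; lra.
move: Hh => /= Ha; subst a; exists l; split => //; split => //; exact/sorted_incr.
Qed.

Lemma Pt_intro t l : incr 0 l -> last 0 l = t -> in_Pt t (0 :: l).
Proof. move=> Hl Ll; split; first exact/sorted_incr. by split. Qed.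

Section Main.
Variable d : nat.
Variable P : mat d -> Prop.
Variable f : mat d -> vec d.
Hypothesis hQ : forall q, P q -> Qmatrix q.
Variable q0 : mat d.
Hypothesis Pq0 : P q0.
Hypothesis fq0 : f q0 = @cst d 0.
Hypothesis hfle : forall q, P q -> vle (f q) (@cst d 0).

Implicit Types (u v w : vec d).

Lemma E_ne : exists q, P q.
Proof. by exists q0. Qed.

Lemma E_bd h u i : 0 <= h -> exists M, forall q, P q -> Sq f q h u i <= M.
Proof.
move=> h0; exists (nb u) => q Pq.
have uv : vle u (@cst d (nb u)) by move=> j; exact: nb_ub.
apply: Rle_trans (@Sq_mono d f q h u _ (hQ Pq) h0 uv i) _.
exact: Sq_cst_le (hQ Pq) h0 (hfle Pq).
Qed.

Lemma E_ge q h u : P q -> 0 <= h -> vle (Sq f q h u) (Eh P f h u).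
Proof. move=> Pq h0 i; exact: (supv_ge E_ne (E_bd u i h0) Pq). Qed.

Lemma E_le h u v : 0 <= h -> (forall q, P q -> vle (Sq f q h u) v) -> vle (Eh P f h u) v.
Proof. move=> h0 H i; apply: (supv_le E_ne (E_bd u i h0)) => q Pq; exact: H. Qed.

Lemma E_mono h u v : 0 <= h -> vle u v -> vle (Eh P f h u) (Eh P f h v).
Proof.
move=> h0 uv; apply: E_le => // q Pq i.
apply: Rle_trans (@Sq_mono d f q h u v (hQ Pq) h0 uv i) _; exact: E_ge.
Qed.

Lemma E_shift h u c : 0 <= h -> Eh P f h (fun j => u j + c) = fun i => Eh P f h u i + c.
Proof.
move=> h0; apply: functional_extensionality => i; apply: Rle_antisym.
- have H : vle (Eh P f h (fun j => u j + c)) (fun i => Eh P f h u i + c).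
    apply: E_le => // q Pq j; rewrite Sq_shift; last exact: hQ.
    have := @E_ge q h u Pq h0 j; lra.
  exact: H i.
- have H : vle (Eh P f h u) (fun j => Eh P f h (fun j => u j + c) j - c).
    apply: E_le => // q Pq j.
    have := @E_ge q h (fun j => u j + c) Pq h0 j; rewrite Sq_shift; [lra | exact: hQ].
  have := H i; lra.
Qed.

Lemma E_cst h a : 0 <= h -> Eh P f h (@cst d a) = @cst d a.
Proof.
move=> h0; apply: functional_extensionality => i; apply: Rle_antisym.
- have H : vle (Eh P f h (@cst d a)) (@cst d a).
    apply: E_le => // q Pq j; exact: Sq_cst_le (hQ Pq) h0 (hfle Pq).
  exact: H i.
- have := @E_ge q0 h (@cst d a) Pq0 h0 i; by rewrite Sq_cst_eq //; apply: hQ.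
Qed.

Lemma E_conv h u v lam i : 0 <= h -> 0 <= lam <= 1 ->
  Eh P f h (fun j => lam * u j + (1 - lam) * v j) i <= lam * Eh P f h u i + (1 - lam) * Eh P f h v i.
Proof.
move=> h0 [l0 l1].
apply: (E_le (v := fun i => lam * Eh P f h u i + (1 - lam) * Eh P f h v i)) => // q Pq j.
rewrite Sq_aff; apply: Rplus_le_compat; apply: Rmult_le_compat_l; try lra; exact: E_ge.
Qed.

Lemma E_sub s t u : 0 <= s -> 0 <= t -> vle (Eh P f (s + t) u) (Eh P f s (Eh P f t u)).
Proof.
move=> s0 t0; apply: E_le; first lra.
move=> q Pq i; rewrite Sq_flow //.
apply: Rle_trans (@Sq_mono d f q s _ _ (hQ Pq) s0 (@E_ge q t u Pq t0) i) _; exact: E_ge.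
Qed.

Lemma E0 u : Eh P f 0 u = u.
Proof.
apply: functional_extensionality => i; apply: Rle_antisym.
- apply: (E_le (v := u)); first exact: Rle_refl.
  move=> q Pq j; rewrite Sq_id; exact: Rle_refl.
- have := @E_ge q0 0 u Pq0 (Rle_refl 0) i; by rewrite Sq_id.
Qed.

Lemma ch_mono a l u v : incr a l -> vle u v -> vle (Echain P f a l u) (Echain P f a l v).
Proof.
elim: l a => [|b r IH] a //= [ab Hr] uv; apply: E_mono; first lra.
exact: IH.
Qed.

Lemma ch_shift a l u c : incr a l ->
  Echain P f a l (fun j => u j + c) = fun i => Echain P f a l u i + c.
Proof.
elim: l a => [|b r IH] a //= [ab Hr]; rewrite IH //; apply: E_shift; lra.
Qed.

Lemma ch_cst a l c : incr a l -> Echain P f a l (@cst d c) = @cst d c.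
Proof.
elim: l a => [|b r IH] a //= [ab Hr]; rewrite IH //; apply: E_cst; lra.
Qed.

Lemma ch_conv a l u v lam : incr a l -> 0 <= lam <= 1 -> forall i,
  Echain P f a l (fun j => lam * u j + (1 - lam) * v j) i <=
  lam * Echain P f a l u i + (1 - lam) * Echain P f a l v i.
Proof.
move=> + hl; elim: l a => [|b r IH] a /=; first by move=> _ i; exact: Rle_refl.
move=> [ab Hr] i.
have ba : 0 <= b - a by lra.
apply: Rle_trans (@E_mono (b - a) _ (fun j => lam * Echain P f b r u j + (1 - lam) * Echain P f b r v j) ba (IH b Hr) i) _.
exact: E_conv.
Qed.

Lemma ch_bound a l u i : incr a l -> Echain P f a l u i <= nb u.
Proof.
move=> Hl; have uv : vle u (@cst d (nb u)) by move=> j; exact: nb_ub.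
have := ch_mono Hl uv i; by rewrite ch_cst.
Qed.

Lemma ch_app a l1 l2 u :
  Echain P f a (l1 ++ l2) u = Echain P f a l1 (Echain P f (last a l1) l2 u).
Proof. elim: l1 a => [|b r IH] a //=; by rewrite IH. Qed.

Lemma ch_trans a c l u :
  Echain P f a l u = Echain P f (a + c) (map (fun x => x + c) l) u.
Proof.
elim: l a => [|b r IH] a //=; rewrite -IH.
by have -> : b + c - (a + c) = b - a by lra.
Qed.

Lemma Ref_ge a l l' u : Ref a l l' -> vle (Echain P f a l u) (Echain P f a l' u).
Proof.
elim => {a l l'} [a|a b l l' ab _ IH|a x b l l' ax xb Hr IH] /=.
- move=> i; exact: Rle_refl.
- apply: E_mono => //; lra.
- have E : b - a = (x - a) + (b - x) by lra.
  move=> i; rewrite E.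
  have h1 : 0 <= x - a by lra.
  have h2 : 0 <= b - x by lra.
  apply: Rle_trans (@E_sub (x - a) (b - x) (Echain P f b l u) h1 h2 i) _.
  exact: (E_mono h1 IH).
Qed.



Lemma Epi_ch l u : Epi P f (0 :: l) u = Echain P f 0 l u.
Proof. case: l => [|b r] //=; exact: E0. Qed.

Lemma N_ne t : 0 <= t -> exists pi, in_Pt t pi.
Proof.
move=> t0; case: (Req_dec t 0) => [->|tn].
  exists [:: 0]; exact: Pt_intro.
exists [:: 0; t]; apply: Pt_intro => //=; split => //; lra.
Qed.

Lemma N_bd t u i : exists M, forall pi, in_Pt t pi -> Epi P f pi u i <= M.
Proof.
exists (nb u) => pi Hpi; have [l [-> [Hl _]]] := Pt_char Hpi.
rewrite Epi_ch; exact: ch_bound.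
Qed.

Lemma N_ge t u i l : incr 0 l -> last 0 l = t -> Echain P f 0 l u i <= Nisio P f t u i.
Proof.
move=> Hl Ll.
have t0 : 0 <= t by rewrite -Ll; exact: incr_last.
rewrite -Epi_ch.
exact: (@supv_ge d _ (in_Pt t) (fun pi => Epi P f pi u) i (N_ne t0) (N_bd t u i) (0 :: l) (Pt_intro Hl Ll)).
Qed.

Lemma N_le t u i M : 0 <= t ->
  (forall l, incr 0 l -> last 0 l = t -> Echain P f 0 l u i <= M) -> Nisio P f t u i <= M.
Proof.
move=> t0 H; apply: (@supv_le d _ (in_Pt t) (fun pi => Epi P f pi u) i (N_ne t0) (N_bd t u i)) => pi Hpi.
have [l [-> [Hl Ll]]] := Pt_char Hpi; rewrite Epi_ch; exact: H.
Qed.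

Lemma N_approx t u i eps : 0 <= t -> 0 < eps ->
  exists l, incr 0 l /\ last 0 l = t /\ Nisio P f t u i - eps < Echain P f 0 l u i.
Proof.
move=> t0 e0; have [pi [Hpi H]] := @supv_approx d _ (in_Pt t) (fun pi => Epi P f pi u) i (N_ne t0) (N_bd t u i) eps e0.
have [l [E [Hl Ll]]] := Pt_char Hpi; subst pi; exists l; split => //; split => //.
by rewrite -Epi_ch.
Qed.

Lemma Nisio0 u : Nisio P f 0 u = u.
Proof.
apply: functional_extensionality => i; apply: Rle_antisym.
  apply: N_le; first exact: Rle_refl.
  case=> [|b r] //= Hl Ll; first exact: Rle_refl.
  case: Hl => b0 Hr; have := incr_last Hr; lra.
by have := @N_ge 0 u i nil I erefl.
Qed.


Lemma N_kernel t : 0 <= t -> is_kernel (Nisio P f t) /\ is_convex_map (Nisio P f t).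
Proof.
move=> t0; split; first split.
- move=> u v uv i; apply: N_le => // l Hl Ll.
  apply: Rle_trans (ch_mono Hl uv i) _; exact: N_ge.
- move=> a; apply: functional_extensionality => i; apply: Rle_antisym.
    apply: N_le => // l Hl Ll; rewrite ch_cst //; exact: Rle_refl.
  have [pi Hpi] := N_ne t0; have [l [_ [Hl Ll]]] := Pt_char Hpi.
  have := @N_ge t (@cst d a) i l Hl Ll; by rewrite ch_cst.
- move=> u v lam hl i; apply: N_le => // l Hl Ll.
  apply: Rle_trans (ch_conv u v Hl hl i) _.
  apply: Rplus_le_compat; apply: Rmult_le_compat_l; try lra; exact: N_ge.
Qed.

Lemma common_ref t u (w : vec d) eps : 0 <= t ->
  (forall j, exists l, incr 0 l /\ last 0 l = t /\ w j - eps < Echain P f 0 l u j) ->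
  exists l, incr 0 l /\ last 0 l = t /\ forall j, w j - eps < Echain P f 0 l u j.
Proof.
move=> t0 H.
suff S : forall r : seq 'I_d, exists l, incr 0 l /\ last 0 l = t /\
    forall j, j \in r -> w j - eps < Echain P f 0 l u j.
  have [l [I [L Hl]]] := S (enum 'I_d); exists l; split => //; split => // j.
  apply: Hl; by rewrite mem_enum.
elim=> [|j r [l [I [L Hl]]]].
  have [pi Hpi] := N_ne t0; have [l [_ [I L]]] := Pt_char Hpi; by exists l.
have [lj [Ij [Lj Hj]]] := H j.
have LL : last 0 l = last 0 lj by rewrite L Lj.
have [l3 [R1 R2]] := merge_ref (leqnn _) I Ij LL.
exists l3; split; first exact: Ref_incr R1.
split; first by rewrite (Ref_last R1).
move=> k; rewrite in_cons => /orP [/eqP -> | kr].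
  exact: Rlt_le_trans Hj (Ref_ge u R2 j).
exact: Rlt_le_trans (Hl k kr) (Ref_ge u R1 k).
Qed.

Lemma N_add s t u : 0 <= s -> 0 <= t -> Nisio P f (s + t) u = Nisio P f s (Nisio P f t u).
Proof.
move=> s0 t0; apply: functional_extensionality => i; apply: Rle_antisym.
- apply: N_le; first lra.
  move=> l Hl Hlast.
  case: (Req_dec s 0) => [seq|sne].
    subst s; rewrite Nisio0; apply: N_ge => //; rewrite Hlast; lra.
  have spos : 0 < s by lra.
  have sl : s <= last 0 l by rewrite Hlast; lra.
  have [l1 [l2 [Rf Ls]]] := split_ref Hl spos sl.
  have Hi := Ref_incr Rf; move/incr_app: Hi => [H1 H2]; rewrite Ls in H2.
  have Hla : last s l2 = s + t.
    have := Ref_last Rf; by rewrite last_app Ls Hlast.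
  apply: Rle_trans (Ref_ge u Rf i) _.
  rewrite ch_app Ls (ch_trans s (-s) l2).
  have -> : s + - s = 0 by lra.
  have Hv : vle (Echain P f 0 (map (fun x => x + - s) l2) u) (Nisio P f t u).
    move=> j; apply: N_ge.
      have := incr_map (- s) H2; by have -> : s + - s = 0 by lra.
    have := last_map s (- s) l2; have -> : s + - s = 0 by lra.
    move=> ->; rewrite Hla; lra.
  apply: Rle_trans (ch_mono H1 Hv i) _; exact: N_ge.
- apply: le_epsilon => eps e0.
  set w := Nisio P f t u.
  have [l2 [I2 [L2 Hw]]] : exists l2, incr 0 l2 /\ last 0 l2 = t /\
      forall j, w j - eps < Echain P f 0 l2 u j.
    apply: common_ref => // j; exact: N_approx.
  apply: N_le => // l1 I1 L1.
  have Hv : vle w (fun j => Echain P f 0 l2 u j + eps) by move=> j; have := Hw j; lra.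
  apply: Rle_trans (ch_mono I1 Hv i) _; rewrite ch_shift //.
  suff : Echain P f 0 l1 (Echain P f 0 l2 u) i <= Nisio P f (s + t) u i by lra.
  rewrite (ch_trans 0 s l2) Rplus_0_l.
  have := ch_app 0 l1 (map (fun x => x + s) l2) u; rewrite L1 => <-.
  have Im : incr s (map (fun x => x + s) l2).
    by have := incr_map s I2; rewrite Rplus_0_l.
  have Lm : last s (map (fun x => x + s) l2) = s + t.
    have := last_map 0 s l2; rewrite Rplus_0_l L2 => ->; lra.
  apply: N_ge; first by apply/incr_app; rewrite L1.
  by rewrite last_app L1.
Qed.

Lemma dom_N : dominates P f (Nisio P f).
Proof.
move=> t u q t0 Pq i; case: (Req_dec t 0) => [->|tn].
  rewrite Sq_id Nisio0; exact: Rle_refl.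
have tpos : 0 < t by lra.
apply: Rle_trans _ (@N_ge t u i [:: t] (conj tpos I) erefl).
rewrite /= Rminus_0_r; exact: E_ge.
Qed.

Lemma min_N (T' : R -> vec d -> vec d) : is_semigroup T' -> dominates P f T' ->
  forall t u, 0 <= t -> vle (Nisio P f t u) (T' t u).
Proof.
move=> [T0 Tadd] Tdom t u t0 i; apply: N_le => // l Hl Ll.
have key : forall a l, incr a l -> vle (Echain P f a l u) (T' (last a l - a) u).
  move=> a' l'; elim: l' a' => [|b r IH] a' /=.
    move=> _ j; rewrite Rminus_diag T0; exact: Rle_refl.
  move=> [ab Hr] j.
  have hb : 0 <= b - a' by lra.
  have hl : 0 <= last b r - b by have := incr_last Hr; lra.
  apply: Rle_trans (E_mono hb (IH b Hr) j) _.
  have -> : last b r - a' = (b - a') + (last b r - b) by lra.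
  rewrite Tadd //; apply: E_le => // q Pq k; exact: Tdom.
have := key 0 l Hl i; by rewrite Ll Rminus_0_r.
Qed.

End Main.


Theorem mainTheorem8 (d : nat) (P : mat d -> Prop) (f : mat d -> vec d)
  (hQ : forall q, P q -> Qmatrix q)
  (hf0 : exists q0, P q0 /\ f q0 = @cst d 0)
  (hfle : forall q, P q -> vle (f q) (@cst d 0))
  (hfin : forall (u : vec d) (i : 'I_d),
            bound (fun x => exists q, P q /\ x = mulv q u i + f q i)) :
  (forall t, 0 <= t -> is_kernel (Nisio P f t) /\ is_convex_map (Nisio P f t)) /\
  (forall u, Nisio P f 0 u = u) /\
  (forall s t, 0 <= s -> 0 <= t ->
     forall u, Nisio P f (s + t) u = Nisio P f s (Nisio P f t u)) /\
  is_semigroup_envelope P f (Nisio P f).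
Proof.
case: hf0 => q0 [Pq0 fq0].
have K := N_kernel hQ Pq0 fq0 hfle.
have N0 := Nisio0 hQ Pq0 fq0 hfle.
have NA := N_add hQ Pq0 fq0 hfle.
split; first exact: K.
split; first exact: N0.
split; first by move=> s t s0 t0 u; exact: NA.
split; first by split; [exact: N0 | move=> s t s0 t0 u; exact: NA].
split; first exact: (dom_N hQ Pq0 fq0 hfle).
exact: (min_N hQ Pq0 fq0 hfle).
Qed.
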